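(* Let $r,s\ge0$, and let $b_i=\prod_{\mathcal F}b_i^{(n)}$ ($1\le i\le r$) and $c_j=\prod_{\mathcal F}c_j^{(n)}$ ($1\le j\le s$) be complex numbers written as ultraproducts of elements $b_i^{(n)},c_j^{(n)}\in\Bbbk$. Then for every central character $\psi$ of $U(\mathfrak{gl}_t)$ there exist central characters $\psi^{(n)}$ of $U(\mathfrak{gl}_n(\Bbbk))$ with $\psi=\prod_{\mathcal F}\psi^{(n)}$ such that $\psi^{(n)}(C_k)=0$ for all $k\ge1$ when $n\le r+s$, and such that for every $n>r+s$, $\psi^{(n)}$ is the central character by which $Z(U(\mathfrak{gl}_n(\Bbbk)))$ acts on some Verma module $M_{\mu^{(n)}}$ with $$\mu^{(n)}_i=b_i^{(n)}\ (1\le i\le r),\qquad \mu^{(n)}_{n-j+1}=c_j^{(n)}\ (1\le j\le s).$$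
   Context: $\Bbbk=\overline{\mathbb Q}$; $\mathcal F$ is a fixed nonprincipal ultrafilter on $\mathbb N$ with a fixed field isomorphism $\prod_{\mathcal F}\Bbbk\simeq\mathbb C$, and $t$ is the image of $\prod_{\mathcal F}n$. For $\mathfrak{gl}_n(\Bbbk)$, $M_\lambda=U(\mathfrak{gl}_n)\otimes_{U(\mathfrak b)}\Bbbk_{\lambda-\rho}$ ($\mathfrak b$ upper triangular Borel, $\rho$ half-sum of positive roots), and $C_k\in Z(U(\mathfrak{gl}_n(\Bbbk)))$ ($k\ge1$) is the central element acting on every $M_\lambda$ by $\sum_i\lambda_i^k$. In $U(\mathfrak{gl}_t)$ (the universal enveloping algebra of $\mathfrak{gl}_t=V\otimes V^*$ in Deligne's category $\operatorname{Rep}(GL_t)$, realized as an ultraproduct of the $U(\mathfrak{gl}_n(\Bbbk))$), $C_k=\prod_{\mathcal F}C_k$ and $Z(U(\mathfrak{gl}_t))=\mathbb C[C_1,C_2,\ldots]$, so a central character $\psi$ is the same as an arbitrary sequence $\psi_k=\psi(C_k)\in\mathbb C$. For central characters $\psi^{(n)}$ of $\mathfrak{gl}_n(\Bbbk)$, $\psi=\prod_{\mathcal F}\psi^{(n)}$ means $\psi(C_k)=\prod_{\mathcal F}\psi^{(n)}(C_k)$ for all $k\ge1$. *)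

(* Defs.v *)
From HB Require Import structures.
From mathcomp Require Import all_boot all_order all_algebra all_field.
From mathcomp Require Import reals.
From mathcomp Require Import complex.
Set Implicit Arguments. Unset Strict Implicit. Unset Printing Implicit Defensive.
Import Order.TTheory GRing.Theory Num.Theory.
Local Open Scope ring_scope.

(* k = \bar Q is modelled by algC (MathComp's algebraic closure of Q);
   C is modelled by R[i] (complex R) for an arbitrary realType R. *)

Definition nonprincipal_ultrafilter (F : (nat -> Prop) -> Prop) : Prop :=
  [/\ F (fun _ => True),
      ~ F (fun _ => False),
      (forall A B : nat -> Prop, F A -> (forall n, A n -> B n) -> F B),
      (forall A B : nat -> Prop, F A -> F B -> F (fun n => A n /\ B n)) &
      (forall A : nat -> Prop, F A \/ F (fun n => ~ A n))] /\
  (forall m : nat, ~ F (fun n => n = m)).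

(* theta : (nat -> algC) -> C is the composite of the canonical projection
   prod_n algC ->> prod_F algC with a field isomorphism prod_F algC ~= C.
   Thus theta f is "prod_F f". *)
Definition ultraproduct_iso (F : (nat -> Prop) -> Prop) (C : fieldType)
    (theta : (nat -> algC) -> C) : Prop :=
  [/\ (forall f g, theta f = theta g <-> F (fun n => f n = g n)),
      (forall y : C, exists f, theta f = y),
      (forall f g, theta (fun n => f n + g n) = theta f + theta g),
      (forall f g, theta (fun n => f n * g n) = theta f * theta g) &
      theta (fun _ => 1) = 1].

(* Value on C_k (k >= 1) of the central character of gl_n(k) by which the
   center acts on the Verma module M_lambda: sum_i lambda_i^k. *)
Definition verma_cc (n : nat) (lambda : 'I_n -> algC) (k : nat) : algC :=
  \sum_(i < n) lambda i ^+ k.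

(* A central character of U(gl_n(k)), recorded through its values
   psi k = psi(C_k), k >= 1 (psi 0 is irrelevant). *)
Definition central_char_gl (n : nat) (psi : nat -> algC) : Prop :=
  exists lambda : 'I_n -> algC, forall k, (0 < k)%N -> psi k = verma_cc lambda k.

(* Main.v *)
Require Import Defs.
From HB Require Import structures.
From mathcomp Require Import all_boot all_order all_algebra all_field.
From mathcomp Require Import reals.
From mathcomp Require Import complex.
From mathcomp Require Import zify ring lra.
From Stdlib Require Import ClassicalEpsilon.
Import Order.TTheory GRing.Theory Num.Theory.
Local Open Scope ring_scope.

Lemma geo0 (w : algC) N k : N.-primitive_root w -> (0 < k < N)%N ->
  \sum_(j < N) (w ^+ k) ^+ j = 0.
Proof.
move=> pw /andP[k0 kN].
have ne1 : w ^+ k != 1.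
  rewrite -(prim_order_dvd pw); apply/negP => /dvdn_leq; rewrite k0 => /(_ isT).
  by rewrite leqNgt kN.
have e1 : (w ^+ k) ^+ N = 1 by rewrite exprAC (prim_expr_order pw) expr1n.
have := subrX1 (w ^+ k) N; rewrite e1 subrr => /esym/eqP.
by rewrite mulf_eq0 subr_eq0 (negPf ne1) /= => /eqP.
Qed.

Definition block (a w : algC) N := [seq a * w ^+ j | j <- iota 0 N].

Lemma block_sum a w N k : \sum_(y <- block a w N) y ^+ k =
   a ^+ k * \sum_(j < N) (w ^+ k) ^+ j.
Proof.
rewrite /block big_map -(subn0 N) -/(index_iota 0 N) big_mkord subn0 mulr_sumr.
by apply: eq_bigr => j _; rewrite exprMn exprAC.
Qed.

Lemma ps (K : nat) (t : nat -> algC) : exists x : seq algC,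
  (size x <= K * K)%N /\ forall k, (0 < k <= K)%N -> \sum_(y <- x) y ^+ k = t k.
Proof.
elim: K => [|K [x [sx hx]]].
  by exists [::]; split => // k; rewrite leqn0 andbC => /andP[/eqP->].
have [w pw] := C_prim_root_exists (ltn0Sn K).
pose d := t K.+1 - \sum_(y <- x) y ^+ K.+1.
pose a := K.+1.-root (d / K.+1%:R).
exists (x ++ block a w K.+1); split.
  rewrite size_cat size_map size_iota; nia.
move=> k /andP[k0 kK].
have -> : \sum_(y <- x ++ block a w K.+1) y ^+ k =
  \sum_(y <- x) y ^+ k + \sum_(y <- block a w K.+1) y ^+ k by rewrite big_cat.
rewrite block_sum.
case: (ltnP k K.+1) => [kK1|kK1].
  by rewrite geo0 ?k0 // mulr0 addr0 hx // k0 -ltnS.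
have -> : k = K.+1 by apply/eqP; rewrite eqn_leq kK.
have e : w ^+ K.+1 = 1 by apply: prim_expr_order.
rewrite e (eq_bigr (fun _ : 'I_K.+1 => 1)); last by move=> j _; rewrite expr1n.
rewrite sumr_const card_ord rootCK // mulr_natr -mulr_natr.
rewrite mulfVK ?pnatr_eq0 // /d; ring.
Qed.
Lemma maxsq (m : nat) : exists K : nat, (K * K <= m)%N /\
  forall k, (k * k <= m)%N -> (k <= K)%N.
Proof.
exists (\max_(K < m.+1 | (K * K <= m)%N) K); split.
  apply: (big_ind (fun K => (K * K <= m)%N)) => //= u v hu hv.
  nia.
move=> k hk; have km : (k < m.+1)%N by nia.
by apply: (@leq_bigmax_cond _ _ _ (Ordinal km)).
Qed.

Lemma sum_nat_ord (g : nat -> algC) n k :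
  \sum_(i < n) g i ^+ k = \sum_(0 <= i < n) g i ^+ k.
Proof. by rewrite big_mkord. Qed.

Lemma per_n (n r s : nat) (b : 'I_r -> nat -> algC) (c : 'I_s -> nat -> algC)
  (f : nat -> nat -> algC) : exists v : nat -> algC,
 [/\ central_char_gl n v,
     (n <= r + s)%N -> forall k, (0 < k)%N -> v k = 0,
     (r + s < n)%N -> exists mu : 'I_n -> algC,
             [/\ (forall (i : 'I_r) (p : 'I_n), val p = val i -> mu p = b i n),
                 (forall (j : 'I_s) (p : 'I_n), val p = (n - j.+1)%N -> mu p = c j n) &
                 (forall k, (0 < k)%N -> v k = verma_cc mu k)]
   & forall k, (0 < k)%N -> (k * k + r + s <= n)%N -> v k = f k n].
Proof.
have [hn|hn] : (n <= r + s)%N \/ (r + s < n)%N by lia.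
  exists (fun _ => 0); split => //; last by move=> k k0 hk; nia.
  - exists (fun _ => 0) => k k0; rewrite /verma_cc big1 // => i _; rewrite expr0n.
    by case: k k0.
  - by move=> h; exfalso; lia.
set m := (n - (r + s))%N.
have nE : n = (r + m + s)%N by rewrite /m; lia.
have [K [KK Kmax]] := maxsq m.
pose bb (i : nat) := if (insub i : option 'I_r) is Some i' then b i' n else 0.
pose cc (i : nat) := if (insub i : option 'I_s) is Some i' then c i' n else 0.
pose t k := f k n - \sum_(0 <= i < r) bb i ^+ k - \sum_(r + m <= i < n) cc (n - i.+1)%N ^+ k.
have [x [sx hx]] := ps K t.
pose x' := x ++ nseq (m - size x) 0.
have sx' : size x' = m by rewrite /x' size_cat size_nseq; lia.
pose g i := if (i < r)%N then bb i else if (i < r + m)%N then nth 0 x' (i - r) else cc (n - i.+1)%N.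
pose mu := fun p : 'I_n => g p.
exists (fun k => verma_cc mu k); split.
- by exists mu.
- by move=> h; exfalso; lia.
- move=> _; exists mu; split => //.
  + move=> i p hp; rewrite /mu /g hp ltn_ord /bb.
    case: insubP => [i' _ Ei'|]; last by rewrite ltn_ord.
    by congr (b _ n); apply: val_inj; rewrite /= Ei'.
  + move=> j p hp; have hj := ltn_ord j.
    rewrite /mu /g hp.
    have -> : (n - j.+1 < r)%N = false by apply/negbTE; rewrite -leqNgt; lia.
    have -> : (n - j.+1 < r + m)%N = false by apply/negbTE; rewrite -leqNgt; lia.
    have -> : (n - (n - j.+1).+1)%N = j by lia.
    rewrite /cc; case: insubP => [j' _ Ej'|]; last by rewrite hj.
    by congr (c _ n); apply: val_inj; rewrite /= Ej'.
move=> k k0 hk.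
have kK : (k <= K)%N by apply: Kmax; lia.
rewrite /verma_cc /mu sum_nat_ord.
have e1 : \sum_(0 <= i < n) g i ^+ k = \sum_(0 <= i < r) g i ^+ k + \sum_(r <= i < n) g i ^+ k.
  by rewrite (big_cat_nat _ (n:=r)) //; lia.
have e2 : \sum_(r <= i < n) g i ^+ k = \sum_(r <= i < r + m) g i ^+ k + \sum_(r + m <= i < n) g i ^+ k.
  by rewrite (big_cat_nat _ (n:=(r + m)%N)) //; lia.
have e3 : \sum_(0 <= i < r) g i ^+ k = \sum_(0 <= i < r) bb i ^+ k.
  by apply: eq_big_nat => i /andP[_ hi]; rewrite /g hi.
have e4 : \sum_(r + m <= i < n) g i ^+ k = \sum_(r + m <= i < n) cc (n - i.+1)%N ^+ k.
  apply: eq_big_nat => i /andP[hi _]; rewrite /g.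
  have -> : (i < r)%N = false by apply/negbTE; rewrite -leqNgt; lia.
  by have -> : (i < r + m)%N = false by apply/negbTE; rewrite -leqNgt; lia.
have e5 : \sum_(r <= i < r + m) g i ^+ k = \sum_(y <- x') y ^+ k.
  rewrite [RHS](big_nth 0) sx' -{1}(add0n r) big_addn.
  have -> : (r + m - r = m)%N by lia.
  apply: eq_big_nat => i /andP[_ hi]; rewrite /g.
  have -> : (i + r < r)%N = false by apply/negbTE; rewrite -leqNgt; lia.
  have -> : (i + r < r + m)%N by lia.
  by rewrite addnK.
have e6 : \sum_(y <- x') y ^+ k = \sum_(y <- x) y ^+ k.
  have -> : \sum_(y <- x') y ^+ k = \sum_(y <- x) y ^+ k + \sum_(y <- nseq (m - size x) 0) y ^+ k
    by rewrite big_cat.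
  rewrite [X in _ + X]big1_seq ?addr0 // => y /andP[_]; rewrite mem_nseq => /andP[_ /eqP->].
  by rewrite expr0n; have -> : (k == 0)%N = false by lia.
rewrite e1 e2 e3 e4 e5 e6 hx ?k0 // /t; ring.
Qed.

Lemma cofin (F : (nat -> Prop) -> Prop) (HF : nonprincipal_ultrafilter F) N :
  F (fun n => (N <= n)%N).
Proof.
have [[Ftop Fbot Fmono FI Fult] Hnp] := HF.
elim: N => [|N IH]; first exact: (Fmono (fun _ => True) _ Ftop (fun n _ => leq0n n)).
have hne : F (fun n => ~ n = N).
  by case: (Fult (fun n => n = N)) => // /Hnp.
apply: (Fmono _ _ (FI _ _ IH hne)) => n [h1 h2]; lia.
Qed.

Theorem lemma8 (R : realType) (F : (nat -> Prop) -> Prop)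
    (theta : (nat -> algC) -> R[i])
    (HF : nonprincipal_ultrafilter F) (Htheta : ultraproduct_iso F theta)
    (r s : nat) (b : 'I_r -> nat -> algC) (c : 'I_s -> nat -> algC)
    (psi : nat -> R[i]) :
  exists psin : nat -> nat -> algC,
    [/\ (forall n, central_char_gl n (psin n)),
        (forall k, (0 < k)%N -> psi k = theta (fun n => psin n k)),
        (forall n, (n <= r + s)%N -> forall k, (0 < k)%N -> psin n k = 0) &
        (forall n, (r + s < n)%N ->
           exists mu : 'I_n -> algC,
             [/\ (forall (i : 'I_r) (p : 'I_n), val p = val i -> mu p = b i n),
                 (forall (j : 'I_s) (p : 'I_n), val p = (n - j.+1)%N -> mu p = c j n) &
                 (forall k, (0 < k)%N -> psin n k = verma_cc mu k)])].
Proof.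
have [Hiff Hsurj _ _ _] := Htheta.
have [[_ _ Fmono _ _] _] := HF.
pose f k := proj1_sig (constructive_indefinite_description _ (Hsurj (psi k))).
have hf k : theta (f k) = psi k := proj2_sig (constructive_indefinite_description _ (Hsurj (psi k))).
pose psin n := proj1_sig (constructive_indefinite_description _ (per_n n r s b c f)).
have hp n := proj2_sig (constructive_indefinite_description _ (per_n n r s b c f)).
exists psin; split.
- by move=> n; case: (hp n) => h _ _ _; exact: h.
- move=> k k0; rewrite -hf; apply/Hiff.
  apply: (Fmono _ _ (@cofin F HF (k * k + r + s))) => n hn.
  by case: (hp n) => _ _ _ h; exact: (esym (h k k0 hn)).
- by move=> n hn; case: (hp n) => _ h _ _; exact: (h hn).
- by move=> n hn; case: (hp n) => _ _ h _; exact: (h hn).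
Qed.
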